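(* A metrizable abelian topological group $G$ is NSS if and only if every absolutely Cauchy summable subset of $G$ is finite.
   Context: A topological group is NSS if it has a neighbourhood of the identity containing no non-trivial subgroup. A subset $A\subseteq G$ is absolutely Cauchy summable if for every neighbourhood $U$ of $0$ there is a finite $F\subseteq A$ such that the subgroup generated by $A\setminus F$ is contained in $U$. *)

(* Defs.v *)
From HB Require Import structures.
From mathcomp Require Import all_boot all_order all_algebra.
From mathcomp Require Import all_classical all_reals all_analysis.
From mathcomp Require Import Rstruct Rstruct_topology.
From Stdlib Require Import Rdefinitions.
Set Implicit Arguments. Unset Strict Implicit. Unset Printing Implicit Defensive.
Import Order.TTheory GRing.Theory Num.Theory.
Local Open Scope classical_set_scope.
Local Open Scope ring_scope.

Definition is_subgroup (G : zmodType) (H : set G) : Prop :=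
  H 0 /\ (forall x y, H x -> H y -> H (x - y)).

Definition gen_subgroup (G : zmodType) (A : set G) : set G :=
  [set x | forall H : set G, is_subgroup H -> A `<=` H -> H x].

Definition NSS (G : topologicalZmodType) : Prop :=
  exists U : set G, nbhs (0 : G) U /\
    forall H : set G, is_subgroup H -> H `<=` U -> H = [set 0].

Definition abs_cauchy_summable (G : topologicalZmodType) (A : set G) : Prop :=
  forall U : set G, nbhs (0 : G) U ->
    exists F : set G, [/\ finite_set F, F `<=` A & gen_subgroup (A `\` F) `<=` U].

Definition metrizable (T : topologicalType) : Prop :=
  exists d : T -> T -> R,
    [/\ forall x y, d x y = 0 <-> x = y,
        forall x y, d x y = d y x,
        forall x y z, d x z <= d x y + d y z
      & forall (x : T) (U : set T),
          nbhs x U <-> exists2 e : R, 0 < e & [set y | d x y < e] `<=` U].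

(* Main.v *)
Require Import Defs.
From mathcomp Require Import all_boot all_order all_algebra.
From mathcomp Require Import all_classical all_reals all_analysis.
From mathcomp Require Import Rstruct Rstruct_topology.
From Stdlib Require Import Rdefinitions.
From mathcomp Require Import finmap.
Import Order.TTheory GRing.Theory Num.Theory.
Local Open Scope classical_set_scope.
Local Open Scope ring_scope.

Lemma half_nbhs (G : topologicalZmodType) (V : set G) : nbhs (0:G) V ->
  exists W : set G, nbhs (0:G) W /\ forall a b, W a -> W b -> V (a + b).
Proof.
move=> V0.
have := @add_continuous G (0,0). rewrite /continuous_at /= addr0 => h.
have [[A B] /= [A0 B0] AB] := h V V0.
exists (A `&` B); split; first exact: filterI.
move=> a b [Aa _] [_ Bb]; exact: (AB (a,b)).
Qed.

Fixpoint Pset (G : zmodType) (H : nat -> set G) (m k : nat) : set G :=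
  match m with
  | 0 => [set 0]
  | m'.+1 => [set z | exists a b, H k.+1 a /\ Pset G H m' k.+1 b /\ z = a + b]
  end.
Arguments Pset {G}.

Section PsetTheory.
Variables (G : zmodType) (H : nat -> set G).
Hypothesis Hs : forall n, is_subgroup (H n).

Lemma P0 m k : Pset H m k 0.
Proof.
elim: m k => [|m IH] k /=; first by [].
exists 0, 0; split; [exact: (Hs _).1 | split; [exact: IH | by rewrite addr0]].
Qed.

Lemma Psub m k x y : Pset H m k x -> Pset H m k y -> Pset H m k (x - y).
Proof.
elim: m k x y => [|m IH] k x y /=.
  by move=> -> ->; rewrite subr0.
move=> [a [b [Ha [Pb ->]]]] [a' [b' [Ha' [Pb' ->]]]].
exists (a - a'), (b - b'); split; first exact: (Hs _).2.
split; first exact: IH.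
by rewrite opprD addrACA.
Qed.

Lemma Pmono1 m k x : Pset H m k x -> Pset H m.+1 k x.
Proof.
elim: m k x => [|m IH] k x /=.
  move=> ->; exists 0, 0; split; [exact: (Hs _).1|split; [by []|by rewrite addr0]].
move=> [a [b [Ha [Pb ->]]]]; exists a, b; split => //; split => //; exact: IH.
Qed.

Lemma Pmono m d k x : Pset H m k x -> Pset H (m + d) k x.
Proof.
elim: d => [|d IH]; first by rewrite addn0.
by move=> /IH; rewrite addnS; apply: Pmono1.
Qed.

Lemma PH j k x : H (j + k).+1 x -> Pset H j.+1 k x.
Proof.
elim: j k x => [|j IH] k x /=.
  move=> Hx; exists x, 0; split => //; split; [by []|by rewrite addr0].
rewrite -addnS => /IH Px; exists 0, x; split; first exact: (Hs _).1.
by split => //; rewrite add0r.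
Qed.

Lemma PW (W : nat -> set G) : (forall n, W n 0) ->
  (forall n a b, W n.+1 a -> W n.+1 b -> W n (a + b)) ->
  (forall n, H n `<=` W n) -> forall m k, Pset H m k `<=` W k.
Proof.
move=> W0 WW HW; elim=> [|m IH] k x /=; first by move=> ->.
move=> [a [b [Ha [Pb ->]]]]; apply: WW; [exact: HW | exact: IH].
Qed.

Definition Tset k : set G := [set x | exists m, Pset H m k x].

Lemma Tsub k : is_subgroup (Tset k).
Proof.
split; first by exists 0%N.
move=> x y [m1 P1] [m2 P2]; exists (m1 + m2)%N; apply: Psub.
  exact: Pmono.
by have := @Pmono m2 m1 k y P2; rewrite addnC.
Qed.
End PsetTheory.
Arguments Tset {G}. Arguments Tsub {G}. Arguments PH {G}. Arguments PW {G}.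

Fixpoint Wseq (G : Type) (f : set G -> set G) (B : nat -> set G) (n : nat) : set G :=
  match n with
  | 0 => B 0%N
  | m.+1 => f (Wseq G f B m `&` B n)
  end.
Arguments Wseq {G}.

Lemma min_dist (G : choiceType) (d : G -> G -> R) (z : G) (s : seq G) :
  (forall a, a \in s -> 0 < d z a) ->
  exists2 e : R, 0 < e & forall a, a \in s -> e <= d z a.
Proof.
elim: s => [|a s IH] hs; first by exists 1 => //.
have [e e0 he] : exists2 e : R, 0 < e & forall b, b \in s -> e <= d z b.
  by apply: IH => b bs; apply: hs; rewrite in_cons bs orbT.
have ha : 0 < d z a by apply: hs; rewrite in_cons eqxx.
exists (Order.min e (d z a)); first by rewrite lt_min e0 ha.
move=> b; rewrite in_cons => /orP[/eqP ->|bs]; first by rewrite ge_min lexx orbT.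
by rewrite ge_min he.
Qed.

Theorem theorem8p1 (G : topologicalZmodType) (hG : metrizable G) :
  NSS G <-> (forall A : set G, abs_cauchy_summable A -> finite_set A).
Proof.
split.
  move=> [U [U0 HU]] A Acs.
  have [F [fF FA gU]] := Acs U U0.
  have gsub : is_subgroup (gen_subgroup (A `\` F)).
    split; first by move=> K [].
    by move=> x y gx gy K Ks KA; apply: Ks.2; [exact: gx|exact: gy].
  have g0 := HU _ gsub gU.
  apply: (@sub_finite_set _ _ (F `|` [set 0])); last first.
    by rewrite finite_setU; split => //; exact: finite_set1.
  move=> x Ax; have [Fx|nFx] := pselect (F x); first by left.
  right; rewrite -g0 => K Ks KA; exact: KA.
move=> Hfin.
have [//|nN] := pselect (NSS G).
have nN' : forall V : set G, nbhs (0:G) V ->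
    exists p : set G * G, [/\ is_subgroup p.1, p.1 `<=` V, p.1 p.2 & p.2 <> 0].
  move=> V V0; apply: contrapT => hne; apply: nN; exists V; split => // K Ks KV.
  apply/seteqP; split => [x Kx|x ->]; last exact: Ks.1.
  apply: contrapT => x0; apply: hne; exists (K, x); split => //.
have [d [d0 dsym dtri dnb]] := hG.
pose ball (e : R) : set G := [set y | d 0 y < e].
have ballN e : 0 < e -> nbhs (0:G) (ball e) by move=> e0; apply/dnb; exists e.
have /choice [f hf] : forall V : set G, exists W : set G, nbhs (0:G) V ->
    nbhs (0:G) W /\ forall a b, W a -> W b -> V (a + b).
  move=> V.
  have [V0|nV0] := pselect (nbhs (0:G) V).
    by have [W hW] := @half_nbhs _ V V0; exists W.
  by exists setT.
pose B (n : nat) := ball (n.+1%:R^-1).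
have BN n : nbhs (0:G) (B n) by apply: ballN; rewrite invr_gt0.
pose W := Wseq f B.
have WP : forall n, nbhs (0:G) (W n) /\ W n `<=` B n.
  elim=> [|n [Wn WB]]; first by split => //; exact: BN.
  have V0 : nbhs (0:G) (W n `&` B n.+1) by apply: filterI.
  have [fV fVs] := hf _ V0.
  split => // y fy.
  have := fVs y 0 fy (nbhs_singleton fV); rewrite addr0; by case.
have Wsum n a b : W n.+1 a -> W n.+1 b -> W n (a + b).
  move=> Wa Wb.
  have V0 : nbhs (0:G) (W n `&` B n.+1) by apply: filterI; [exact: (WP n).1|exact: BN].
  by have [_ /(_ a b Wa Wb) []] := hf _ V0.
have /choice [g hg] : forall n, exists p : set G * G,
    [/\ is_subgroup p.1, p.1 `<=` W n, p.1 p.2 & p.2 <> 0].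
  by move=> n; apply: nN'; exact: (WP n).1.
pose Hn n := (g n).1.
pose x n := (g n).2.
have Hs n : is_subgroup (Hn n) by have [] := hg n.
have HW n : Hn n `<=` W n by have [] := hg n.
have Hx n : Hn n (x n) by have [] := hg n.
have x0 n : x n <> 0 by have [] := hg n.
have dpos a : a <> 0 -> 0 < d 0 a.
  move=> a0; rewrite lt_def; apply/andP; split.
    by apply/eqP => /d0 h; apply: a0; rewrite -h.
  have := dtri 0 a 0; rewrite (dsym a 0).
  have -> : d 0 0 = 0 by apply/d0.
  move=> h; rewrite -(@pmulr_rge0 _ 2) //; by rewrite mulr2n mulrDl !mul1r.
have Acs : abs_cauchy_summable (range x).
  move=> U /dnb [e e0 eU].
  have [k hk] := ltr_add_invr e0; rewrite add0r in hk.
  exists (x @` `I_k.+1); split.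
  - exact/finite_image/finite_II.
  - by move=> y [n _ <-]; exists n.
  - move=> y gy; apply: eU.
    have : Tset Hn k y.
      apply: gy; first exact: Tsub.
      move=> z [[n _ <-] nF].
      have kn : leq k.+1 n.
        rewrite ltnNge; apply/negP => nk; apply: nF; exists n => //.
      exists (n - k.+1).+1%N; apply: PH => //.
      by rewrite -addnS subnK.
    move=> [m Pm].
    have := @PW _ Hn W (fun n => nbhs_singleton (WP n).1) Wsum HW m k y Pm.
    move=> /(WP k).2; rewrite /B /ball /= => lt; exact: lt_trans lt hk.
have /finite_fsetP [X hX] := Hfin _ Acs.
have [|e e0 he] := @min_dist G d 0 (X : seq G).
  move=> a aX; apply: dpos => a0.
  have : [set` X] a by [].
  rewrite -hX => -[n _ xn]; apply: (x0 n); by rewrite xn.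
have [k hk] := ltr_add_invr e0; rewrite add0r in hk.
have : [set` X] (x k) by rewrite -hX; exists k.
move=> /he hle.
have := (WP k).2 _ (HW k _ (Hx k)); rewrite /B /ball /= => lt.
by have := lt_le_trans (lt_trans lt hk) hle; rewrite ltxx.
Qed.
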